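(* Let $(X,d)$ be a compact metric space, $\lambda>0$, and $\ell\in\mathrm{LSC}(X)$ bounded with $\inf_X\ell=0$. Then: (i) if $u,v\in\mathrm{LSC}(X)$ are, respectively, a bounded subsolution and a bounded supersolution of $(\mathcal{G}_\lambda)$, then $u\le v$; (ii) the equation $(\mathcal{G}_\lambda)$ admits a unique (Lipschitz) solution.
   Context: $\mathrm{LSC}(X)$ is the set of real-valued lower semicontinuous functions on $X$. Global slope: $G[u](x)=\sup_{y\neq x}\frac{(u(x)-u(y))_+}{d(x,y)}$ if $u(x)<+\infty$, $G[u](x)=+\infty$ otherwise. Equation $(\mathcal{G}_\lambda)$: $\lambda u+G[u]=\ell$ on $X$ with $\inf_Xu=0$. A subsolution is $u:X\to\mathbb{R}\cup\{+\infty\}$ with $\inf_Xu=0$ and $\lambda u+G[u]\le\ell$ on $X$; a supersolution is a lower semicontinuous $v:X\to\mathbb{R}\cup\{+\infty\}$ with $\inf_Xv=0$ and $\lambda v+G[v]\ge\ell$ on $X$; a solution is a lower semicontinuous function that is both. *)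

(* Defs.v *)
From HB Require Import structures.
From mathcomp Require Import all_boot all_order all_algebra.
From mathcomp Require Import all_classical all_reals.
From mathcomp Require Import ereal.
From Stdlib Require List.
Set Implicit Arguments. Unset Strict Implicit. Unset Printing Implicit Defensive.
Import Order.TTheory GRing.Theory Num.Theory.
Local Open Scope classical_set_scope.
Local Open Scope ring_scope.

Section Defs.
Variables (R : realType) (X : Type) (d : X -> X -> R).

Definition is_metric : Prop :=
  (forall x y, d x y = 0 <-> x = y) /\
  (forall x y, d x y = d y x) /\
  (forall x y z, d x z <= d x y + d y z).

Definition dopen (A : X -> Prop) : Prop :=
  forall x, A x -> exists2 r : R, 0 < r & forall y, d x y < r -> A y.

Definition dcompact : Prop :=
  forall (I : Type) (U : I -> X -> Prop),
    (forall i, dopen (U i)) -> (forall x, exists i, U i x) ->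
    exists s : list I, forall x, exists i, List.In i s /\ U i x.

Definition lsc (u : X -> \bar R) : Prop :=
  forall x (c : R), (c%:E < u x)%E ->
    exists2 r : R, 0 < r & forall y, d x y < r -> (c%:E < u y)%E.

Definition bounded_fun (f : X -> R) : Prop :=
  exists M : R, forall x, `|f x| <= M.

Definition lipschitz (f : X -> R) : Prop :=
  exists L : R, forall x y, `|f x - f y| <= L * d x y.

Definition elift (f : X -> R) : X -> \bar R := fun x => (f x)%:E.

Definition inf_zero (u : X -> \bar R) : Prop := ereal_inf (range u) = 0%E.

(* global slope G[u](x); the value 0 is added to the supremum so that
   the supremum of the (nonnegative) quotients is 0 when X = {x}. *)
Definition gslope (u : X -> \bar R) (x : X) : \bar R :=
  if u x is +oo%E then +oo%E else
  ereal_sup (0%E |` [set (maxe (u x - u y) 0 * ((d x y)^-1)%:E)%E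
                      | y in [set y | y <> x]]).

Definition subsolution (lam : R) (l : X -> R) (u : X -> \bar R) : Prop :=
  inf_zero u /\ forall x, (lam%:E * u x + gslope u x <= (l x)%:E)%E.

Definition supersolution (lam : R) (l : X -> R) (v : X -> \bar R) : Prop :=
  lsc v /\ inf_zero v /\ forall x, ((l x)%:E <= lam%:E * v x + gslope v x)%E.

Definition solution (lam : R) (l : X -> R) (u : X -> \bar R) : Prop :=
  subsolution lam l u /\ supersolution lam l u.

End Defs.

(* Main.v *)
Require Import Defs.
From HB Require Import structures.
From mathcomp Require Import all_boot all_order all_algebra.
From mathcomp Require Import all_classical all_reals.
From mathcomp Require Import ereal.
From Stdlib Require List.
From mathcomp Require Import lra.
Import Order.TTheory GRing.Theory Num.Theory.
Local Open Scope classical_set_scope.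
Local Open Scope ring_scope.
Set Implicit Arguments. Unset Strict Implicit.

Section Aux.
Variables (R : realType) (X : Type) (d : X -> X -> R).
Hypothesis dm : is_metric d.

Lemma d_ge0 x y : 0 <= d x y.
Proof.
case: dm => [H0 [Hs Ht]].
have := Ht x y x; rewrite (proj2 (H0 x x) erefl) (Hs y x) => h.
by rewrite -(@pmulr_rge0 _ 2) // mulr2n mulrDl mul1r.
Qed.

Lemma d_gt0 x y : y <> x -> 0 < d x y.
Proof.
move=> yx; rewrite lt_def d_ge0 andbT; apply/eqP => /(proj1 dm) h.
by apply: yx.
Qed.

Lemma d_xx x : d x x = 0.
Proof. exact: (proj2 (proj1 dm x x) erefl). Qed.

Lemma d_sym x y : d x y = d y x.
Proof. exact: (proj1 (proj2 dm)). Qed.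

Lemma d_tri x y z : d x z <= d x y + d y z.
Proof. exact: (proj2 (proj2 dm)). Qed.

Lemma gslope_ge0 (u : X -> R) x : (0 <= gslope d (elift u) x)%E.
Proof.
rewrite /gslope /elift /=; apply: ereal_sup_ubound; by left.
Qed.

Lemma gslope_elem (u : X -> R) x y : y <> x ->
  ((Num.max (u x - u y) 0 / d x y)%:E <= gslope d (elift u) x)%E.
Proof.
move=> yx; rewrite /gslope /elift /=; apply: ereal_sup_ubound; right.
exists y => //.
by rewrite EFinM EFin_max EFinB.
Qed.

Lemma gslope_le (u : X -> R) x (b : R) : 0 <= b ->
  (forall y, y <> x -> u x - u y <= b * d x y) ->
  (gslope d (elift u) x <= b%:E)%E.
Proof.
move=> b0 H; rewrite /gslope /elift /=; apply: ge_ereal_sup => z [-> | [y yx <-]].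
  by rewrite lee_fin.
rewrite -EFinB -EFin_max -EFinM lee_fin ler_pdivrMr; last exact: d_gt0.
rewrite ge_max H //=; apply: mulr_ge0 => //; exact: d_ge0.
Qed.

Lemma gslope_lt (u : X -> R) x (a : R) : 0 <= a ->
  (a%:E < gslope d (elift u) x)%E ->
  exists y, y <> x /\ a * d x y < u x - u y.
Proof.
move=> a0; rewrite /gslope /elift /= => /ereal_sup_gt [z [-> | [y yx <-]]].
  by rewrite lte_fin ltNge a0.
rewrite -EFinB -EFin_max -EFinM lte_fin ltr_pdivlMr; last exact: d_gt0.
move=> h; exists y; split => //.
move: h; rewrite lt_max => /orP [//|].
move=> h; exfalso.
have : 0 <= a * d x y by apply: mulr_ge0 => //; exact: d_ge0.
by rewrite leNgt h.
Qed.
End Aux.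

Lemma list_max (X : Type) (R : realType) (f : X -> R) (s : list X) (x : X) :
  List.In x s -> exists y, List.In y s /\ forall z, List.In z s -> f z <= f y.
Proof.
elim: s x => [//|a s IH] x /= [ax|xs].
  case: s IH => [|b s] IH.
    by exists a; split; [left|move=> z [<-|//]].
  have [y [ys hy]] := IH b (or_introl erefl).
  case: (leP (f a) (f y)) => h.
    exists y; split; [by right|move=> z [<-//|]; exact: hy].
  exists a; split; [by left|move=> z [<-//|/hy hz]]; exact: (le_trans hz (ltW h)).
have [y [ys hy]] := IH x xs.
case: (leP (f a) (f y)) => h.
  exists y; split; [by right|move=> z [<-//|]; exact: hy].
exists a; split; [by left|move=> z [<-//|/hy hz]]; exact: (le_trans hz (ltW h)).
Qed.

Lemma argmax (R : realType) (X : Type) (d : X -> X -> R) (f : X -> R) :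
  dcompact d -> (forall x c, f x < c -> exists2 r : R, 0 < r & forall y, d x y < r -> f y < c) ->
  forall x : X, exists x0, forall y, f y <= f x0.
Proof.
move=> dc usc x; apply: contrapT => nex.
have H : forall z, exists y, f z < f y.
  move=> z; apply: contrapT => nz; apply: nex; exists z => y.
  by rewrite leNgt; apply/negP => h; apply: nz; exists y.
have op : forall y, dopen d (fun z => f z < f y).
  move=> y z hz; exact: usc.
have [s hs] := @dc X (fun y z => f z < f y) op H.
have [i [iS _]] := hs x.
have [y0 [y0s hy0]] := @list_max X R f s i iS.
have [j [js hj]] := hs y0.
have := hy0 j js; rewrite leNgt hj //.
Qed.

Lemma mx_ge (R : realType) (a : R) : a <= Num.max a 0.
Proof. by rewrite le_max lexx. Qed.

Section Main.
Variables (R : realType) (X : Type) (d : X -> X -> R) (lam : R) (l : X -> R).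
Hypotheses (dm : is_metric d) (dc : dcompact d) (lam0 : 0 < lam)
  (llsc : lsc d (elift l)) (lb : bounded_fun l) (linf : inf_zero (elift l)).

Definition Psub (u : X -> R) :=
  (forall x, 0 <= u x) /\ (forall x, lam * u x <= l x) /\
  (forall x y, u x - u y <= (l x - lam * u x) * d x y).

Definition Psuper (v : X -> R) :=
  forall x a, 0 <= a -> a < l x - lam * v x ->
  exists y, y <> x /\ a * d x y < v x - v y.

Lemma inf_zero_ge0 (u : X -> R) : inf_zero (elift u) -> forall x, 0 <= u x.
Proof.
move=> h x.
have : (ereal_inf (range (elift u)) <= (u x)%:E)%E by apply: ereal_inf_lbound; exists x.
by rewrite h lee_fin.
Qed.

Lemma inf_zeroI (u : X -> R) : (forall x, 0 <= u x) -> (exists x, u x = 0) ->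
  inf_zero (elift u).
Proof.
move=> h0 [x0 hx0]; rewrite /inf_zero; apply/le_anti/andP; split.
  have : (ereal_inf (range (elift u)) <= (u x0)%:E)%E by apply: ereal_inf_lbound; exists x0.
  by rewrite hx0.
by apply: le_ereal_inf_tmp => z [y _ <-]; rewrite /elift lee_fin.
Qed.

Lemma l_ge0 x : 0 <= l x. Proof. exact: inf_zero_ge0. Qed.

Lemma gs_fin (u : X -> R) x b : (gslope d (elift u) x <= b%:E)%E ->
  exists g, gslope d (elift u) x = g%:E /\ 0 <= g /\ g <= b.
Proof.
have := gslope_ge0 d u x.
case: (gslope d (elift u) x) => [g| |] //.
by rewrite !lee_fin => g0 gb; exists g.
Qed.

Lemma sub_to u : subsolution d lam l (elift u) -> Psub u.
Proof.
case=> hinf H; split; first exact: inf_zero_ge0.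
have key : forall x, exists g, gslope d (elift u) x = g%:E /\ 0 <= g /\
    lam * u x + g <= l x.
  move=> x; have := H x; have := gslope_ge0 d u x.
  case: (gslope d (elift u) x) => [g| |] //.
  move=> g0 h; exists g; split=> //.
split.
  move=> x; have [g [_ [g0 h]]] := key x.
  by apply: le_trans h; rewrite lerDl.
move=> x y; have [g [hg [g0 h]]] := key x.
have [->|yx] := pselect (y = x).
  by rewrite d_xx // mulr0 subrr.
have := @gslope_elem _ _ d u x y yx; rewrite hg lee_fin ler_pdivrMr; last exact: d_gt0.
move=> hm; apply: le_trans (le_trans (mx_ge _) hm) _.
apply: ler_wpM2r; first exact: d_ge0.
by rewrite lerBrDl.
Qed.

Lemma sub_from u : Psub u -> (exists x, u x = 0) -> subsolution d lam l (elift u).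
Proof.
move=> [h0 [h1 h2]] hz; split; first exact: inf_zeroI.
move=> x.
have hb : (gslope d (elift u) x <= (l x - lam * u x)%:E)%E.
  apply: (gslope_le dm); first by rewrite subr_ge0.
  by move=> y _; exact: h2.
have [g [-> [g0 gb]]] := gs_fin hb.
by rewrite /elift -EFinM -EFinD lee_fin -lerBrDl.
Qed.

Lemma super_to v : supersolution d lam l (elift v) -> Psuper v.
Proof.
case=> _ [_ H] x a a0 alt; apply: (gslope_lt dm a0).
rewrite ltNge; apply/negP => /gs_fin [g [hg [g0 ga]]].
have := H x; rewrite hg /elift -EFinM -EFinD lee_fin => h.
have : l x <= lam * v x + a by apply: le_trans h _; rewrite lerD2l.
move=> h2; lra.
Qed.

Lemma super_from v : (forall x, 0 <= v x) -> (exists x, v x = 0) ->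
  lsc d (elift v) -> Psuper v -> supersolution d lam l (elift v).
Proof.
move=> h0 hz hl hs; split=> //; split; first exact: inf_zeroI.
move=> x; have := gslope_ge0 d v x; have := @gslope_elem _ _ d v x.
case: (gslope d (elift v) x) => [g| |] //.
- rewrite lee_fin => hel g0.
  rewrite /elift -EFinM -EFinD lee_fin leNgt; apply/negP => hlt.
  have ha0 : 0 <= (g + (l x - lam * v x)) / 2.
    by apply: divr_ge0 => //; apply: addr_ge0 => //; rewrite subr_ge0; lra.
  have [y [yx hy]] := hs x _ ha0 ltac:(lra).
  have := hel y yx; rewrite lee_fin ler_pdivrMr; last exact: d_gt0.
  move=> hm; have hm' := le_trans (mx_ge _) hm.
  have dp := d_gt0 dm yx.
  have : (g + (l x - lam * v x)) / 2 * d x y < g * d x y by lra.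
  rewrite ltr_pM2r // => h; lra.
- by move=> _ _; rewrite leey.
Qed.

Lemma lipc : exists L, 0 < L /\ forall u, Psub u -> forall x y, u x - u y <= L * d x y.
Proof.
case: lb => M hM; exists (Num.max M 0 + 1); split.
  by apply: ltr_wpDl => //; rewrite le_max lexx orbT.
move=> u [h0 [h1 h2]] x y; apply: le_trans (h2 x y) _.
apply: ler_wpM2r; first exact: d_ge0.
have := hM x; have := h0 x; rewrite ler_norml => u0 /andP [_ lM].
have : 0 <= lam * u x by apply: mulr_ge0 => //; exact: ltW.
have : M <= Num.max M 0 by rewrite le_max lexx.
lra.
Qed.

Lemma lsc_lip u L : 0 < L -> (forall x y, u x - u y <= L * d x y) -> lsc d (elift u).
Proof.
move=> L0 H x c; rewrite /elift lte_fin => cx.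
exists ((u x - c) / L); first by apply: divr_gt0 => //; rewrite subr_gt0.
move=> y dxy; rewrite lte_fin.
have := H x y; rewrite ltr_pdivlMr // in dxy.
have : d x y * L = L * d x y by rewrite mulrC.
lra.
Qed.

Lemma comparison u v : Psub u -> lsc d (elift v) -> Psuper v -> forall x, u x <= v x.
Proof.
move=> hu hv hs x.
have [L [L0 HL]] := lipc.
have Lu := HL u hu.
pose f y := u y - v y.
have usc : forall x c, f x < c -> exists2 r : R, 0 < r & forall y, d x y < r -> f y < c.
  move=> z c fz.
  have e0 : 0 < (c - f z) / 2 by apply: divr_gt0 => //; rewrite subr_gt0.
  have [r1 r10 hr1] := hv z (v z - (c - f z) / 2) ltac:(rewrite /elift lte_fin; lra).
  exists (Num.min r1 ((c - f z) / 2 / L)).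
    by rewrite lt_min r10 /=; apply: divr_gt0.
  move=> y; rewrite lt_min => /andP [d1 d2].
  have := hr1 y d1; rewrite /elift lte_fin => vy.
  rewrite ltr_pdivlMr // in d2.
  have := Lu y z; rewrite (d_sym dm y z).
  have : d z y * L = L * d z y by rewrite mulrC.
  rewrite /f in fz vy d2 *; lra.
have [x0 hx0] := argmax dc usc x.
rewrite leNgt; apply/negP => hlt.
have fx0 : v x0 < u x0 by have := hx0 x; rewrite /f; lra.
case: hu => [_ [h1 h2]].
have hlu := h1 x0.
have hlv : lam * v x0 < lam * u x0 by rewrite ltr_pM2l.
have a0 : 0 <= ((l x0 - lam * u x0) + (l x0 - lam * v x0)) / 2.
  by apply: divr_ge0 => //; lra.
have [y [yx hy]] := hs x0 _ a0 ltac:(lra).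
have := hx0 y; rewrite /f => fy.
have := h2 x0 y => h.
have dp := d_gt0 dm yx.
have : (l x0 - lam * u x0) * d x0 y < ((l x0 - lam * u x0) + (l x0 - lam * v x0)) / 2 * d x0 y.
  by rewrite ltr_pM2r //; lra.
lra.
Qed.

Lemma Psub0 : Psub (fun _ => 0).
Proof.
split; first by [].
split; first by move=> x; rewrite mulr0; exact: l_ge0.
move=> x y; rewrite subrr mulr0 subr0; apply: mulr_ge0; [exact: l_ge0|exact: d_ge0].
Qed.

Definition Ex (x : X) : set R := fun r => exists u, Psub u /\ u x = r.

Lemma hsup x : has_sup (Ex x).
Proof.
split; first by exists 0; exists (fun _ => 0); split => //; exact: Psub0.
exists (l x / lam) => r [u [[_ [h1 _]] <-]].
by rewrite ler_pdivlMr // mulrC.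
Qed.

Definition U x := sup (Ex x).

Lemma U_ub u x : Psub u -> u x <= U x.
Proof. by move=> hu; apply: sup_upper_bound (hsup x) _ _; exists u. Qed.

Lemma U_Psub : Psub U.
Proof.
split; first by move=> x; exact: (U_ub x Psub0).
split.
  move=> x; rewrite -ler_pdivlMl //; apply: ge_sup; first by case: (hsup x).
  by move=> r [u [[_ [h1 _]] <-]]; rewrite ler_pdivlMl.
move=> x y; have [->|yx] := pselect (y = x); first by rewrite d_xx // mulr0 subrr.
have dp := d_gt0 dm yx.
rewrite leNgt; apply/negP => hlt.
set del := U x * (1 + lam * d x y) - U y - l x * d x y.
have del0 : 0 < del.
  rewrite /del; move: hlt; rewrite mulrBl mulrDr mulr1; lra.
have k0 : 0 < 1 + lam * d x y by apply: ltr_pwDl => //; apply: mulr_ge0 => //; exact: ltW.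
have [r [u [hu <-]] hr] := sup_adherent (divr_gt0 del0 k0) (hsup x).
have := U_ub y hu; case: hu => [_ [_ h2]]; have := h2 x y => h hy.
have : (U x - del / (1 + lam * d x y)) * (1 + lam * d x y) < u x * (1 + lam * d x y).
  by rewrite ltr_pM2r.
rewrite mulrBl divfK; last by rewrite gt_eqF.
rewrite /del; move: h; rewrite mulrBl mulrDr mulr1 mulrDr mulr1.
have : lam * u x * d x y = u x * (lam * d x y) by rewrite mulrCA mulrA.
lra.
Qed.

Lemma U_super : Psuper U.
Proof.
move=> x0 a a0 alt; apply: contrapT => nex.
have Hg : forall y, U x0 - U y <= a * d x0 y.
  move=> y; rewrite leNgt; apply/negP => h; apply: nex; exists y; split => //.
  move=> yx; move: h; rewrite yx d_xx // mulr0 subrr ltxx //.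
set b := l x0 - lam * U x0.
set K := (a + b) / 2.
have Ka : a < K by rewrite /K /b; lra.
have Kb : K < b by rewrite /K /b; lra.
set eps := (b - K) / 2.
have eps0 : 0 < eps by rewrite /eps; lra.
have hc : ((l x0 - eps)%:E < elift l x0)%E by rewrite /elift lte_fin; lra.
have [r r0 hr] := llsc hc.
set eta := Num.min ((K - a) * r) ((b - K) / (2 * lam)).
have eta0 : 0 < eta.
  rewrite /eta lt_min; apply/andP; split; first by apply: mulr_gt0 => //; lra.
  by apply: divr_gt0; [lra|apply: mulr_gt0].
have eta1 : eta <= (K - a) * r by rewrite /eta ge_min lexx.
have eta2 : lam * eta <= (b - K) / 2.
  have : eta <= (b - K) / (2 * lam) by rewrite /eta ge_min lexx orbT.
  rewrite ler_pdivlMr ?mulr_gt0 // => h.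
  rewrite ler_pdivlMr //; have : eta * (2 * lam) = lam * eta * 2 by rewrite [2 * lam]mulrC mulrA [eta * lam]mulrC.
  lra.
set c := U x0 + eta.
pose W y := Num.max (U y) (c - K * d x0 y).
have UW y : U y <= W y by rewrite /W le_max lexx.
have HW : Psub W.
  have [h0 [h1 h2]] := U_Psub.
  split; first by move=> y; apply: le_trans (UW y).
  suff key : forall y, lam * W y <= l y /\ forall z, W y - W z <= (l y - lam * W y) * d y z.
    by split => y; [exact: (proj1 (key y))|exact: (proj2 (key y))].
  move=> y; case: (leP (c - K * d x0 y) (U y)) => hy.
    have -> : W y = U y by rewrite /W max_l.
    split=> // z; apply: le_trans (h2 y z); rewrite lerD2l lerN2; exact: UW.
  have -> : W y = c - K * d x0 y by rewrite /W max_r // ltW.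
  have dr : d x0 y < r.
    have hg := Hg y; rewrite /c in hy.
    have e : (K - a) * d x0 y = K * d x0 y - a * d x0 y by rewrite mulrBl.
    have : (K - a) * d x0 y < (K - a) * r by apply: lt_le_trans eta1; lra.
    by rewrite ltr_pM2l ?subr_gt0.
  have ly := hr y dr; rewrite /elift lte_fin in ly.
  have dy0 : 0 <= d x0 y by exact: d_ge0.
  have Kl : K <= l y - lam * (c - K * d x0 y).
    have : lam * (c - K * d x0 y) <= lam * c.
      rewrite ler_pM2l // lerBlDr lerDl; apply: mulr_ge0 => //; lra.
    have hb : b = l x0 - lam * U x0 by [].
    have heps : eps = (b - K) / 2 by [].
    have hlc : lam * c = lam * U x0 + lam * eta by rewrite mulrDr.
    lra.
  have K0 : 0 < K by lra.
  split.
    have : 0 <= l y - lam * (c - K * d x0 y) by lra.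
    lra.
  move=> z.
  have Wz : c - K * d x0 z <= W z by rewrite /W le_max lexx orbT.
  have tri := d_tri dm x0 y z.
  have : K * d x0 z <= K * (d x0 y + d y z) by rewrite ler_pM2l.
  have : K * d y z <= (l y - lam * (c - K * d x0 y)) * d y z.
    by apply: ler_wpM2r => //; exact: d_ge0.
  rewrite mulrDr; lra.
have := U_ub x0 HW.
have : c - K * d x0 x0 <= W x0 by rewrite /W le_max lexx orbT.
rewrite d_xx // mulr0 subr0 /c; lra.
Qed.

Lemma U_zero : exists x, U x = 0.
Proof.
have [x0 _] : exists x : X, True.
  apply: contrapT => nx.
  have : ((+oo : \bar R) <= ereal_inf (range (elift l)))%E.
    apply: le_ereal_inf_tmp => z [y _ _]; exfalso; apply: nx; by exists y.
  by rewrite linf.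
have usc : forall x c, - l x < c -> exists2 r : R, 0 < r & forall y, d x y < r -> - l y < c.
  move=> x c hc.
  have hc' : ((- c)%:E < elift l x)%E by rewrite /elift lte_fin; lra.
  have [r r0 hr] := llsc hc'.
  exists r => // y /hr; rewrite /elift lte_fin; lra.
have [xs hxs] := argmax dc usc x0.
have lxs : l xs = 0.
  apply/le_anti/andP; split; last exact: l_ge0.
  have : ((l xs)%:E <= ereal_inf (range (elift l)))%E.
    apply: le_ereal_inf_tmp => z [y _ <-]; rewrite /elift lee_fin.
    have := hxs y; lra.
  by rewrite linf lee_fin.
exists xs; have [h0 [h1 _]] := U_Psub.
apply/le_anti/andP; split; last exact: h0.
have := h1 xs; rewrite lxs => h.
rewrite -(@ler_pM2l _ lam) // mulr0 //.
Qed.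

Lemma U_lip : lipschitz d U.
Proof.
case: lb => M hM; exists M => x y.
have [h0 [h1 h2]] := U_Psub.
have hb : forall x y, U x - U y <= M * d x y.
  move=> a b'; apply: le_trans (h2 a b') _; apply: ler_wpM2r; first exact: d_ge0.
  have := hM a; rewrite ler_norml => /andP [_ lM].
  have : 0 <= lam * U a by apply: mulr_ge0 => //; exact: ltW.
  lra.
rewrite ler_norml; apply/andP; split; last exact: hb.
have := hb y x; rewrite (d_sym dm y x); lra.
Qed.

End Main.

Theorem proposition3p13 (R : realType) (X : Type) (d : X -> X -> R)
  (lam : R) (l : X -> R) :
  is_metric d -> dcompact d -> 0 < lam ->
  lsc d (elift l) -> bounded_fun l -> inf_zero (elift l) ->
  (forall u v : X -> R,
      lsc d (elift u) -> lsc d (elift v) -> bounded_fun u -> bounded_fun v ->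
      subsolution d lam l (elift u) -> supersolution d lam l (elift v) ->
      forall x, u x <= v x) /\
  (exists u : X -> R,
      lipschitz d u /\ solution d lam l (elift u) /\
      forall w : X -> \bar R, solution d lam l w -> w = elift u).
Proof.
move=> dm dc lam0 llsc lb linf; split.
  move=> u v _ lv _ _ su sv x.
  exact: (comparison dm dc lam0 lb (sub_to dm su) lv (super_to dm sv)).
have UP := U_Psub dm lam0 linf.
have [L [L0 HL]] := lipc dm lam0 lb.
have Ulsc : lsc d (elift (U d lam l)) := lsc_lip L0 (HL _ UP).
have Uz := U_zero dm dc lam0 llsc linf.
exists (U d lam l); split; first exact: (U_lip dm lam0 lb linf).
split.
  split; first exact: (sub_from dm UP Uz).
  exact: (super_from dm (proj1 UP) Uz Ulsc (U_super dm lam0 llsc linf)).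
move=> w [sw sv].
have w0 : forall x, (0 <= w x)%E.
  move=> x; have : (ereal_inf (range w) <= w x)%E by apply: ereal_inf_lbound; exists x.
  by rewrite (proj1 sw).
have wfin : forall x, w x = (fine (w x))%:E.
  move=> x; have := w0 x; have := proj2 sw x.
  rewrite /gslope; case: (w x) => [r| |] //.
  by rewrite mulry gtr0_sg // mul1e.
have ew : w = elift (fun x => fine (w x)) by apply: funext => x; rewrite /elift -wfin.
rewrite ew in sw sv *.
set v := (fun x => fine (w x)) in sw sv *.
have vP := sub_to dm sw.
have vU : forall x, v x <= U d lam l x.
  move=> x; apply: U_ub => //.
have Uv := comparison dm dc lam0 lb UP (proj1 sv) (super_to dm sv).
by apply: funext => x; rewrite /elift; congr (_%:E); apply/le_anti; rewrite vU Uv.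
Qed.
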